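(* Let $f(z)=-2\ln(1+e^{-z/2})$ and, for an integer $k\geq0$ and real $x$, $$H_k(x)=\int_0^{\infty}\mathrm{d}\ell\;\ell^{2k+1}\big(f(\ell+x)-f(\ell-x)\big).$$ Then $H_k$ is an odd polynomial of degree $2k+3$, given by $$H_k(x)=(2k+1)!\sum_{i=0}^{k+1}\theta_{i-1}\,\frac{x^{2k+3-2i}}{(2k+3-2i)!},$$ where $\theta_m=\zeta(2m+2)\,(2^{2m+3}-4)$ for $m\geq-1$ (in particular $\theta_{-1}=1$).
   Context: $\zeta$ denotes the Riemann zeta function, with $\zeta(0)=-\tfrac12$. *)

(* Defs.v *)
From Stdlib Require Import Reals.
From Coquelicot Require Import Coquelicot.
Open Scope R_scope.

Definition fL (z : R) : R := -2 * ln (1 + exp (- z / 2)).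

(* Riemann zeta at non-negative integers n:
   zeta 0 = -1/2 (convention from the context), and for n >= 1 the
   Dirichlet series sum_{j>=1} 1/j^n (only used for even n >= 2,
   where it converges). *)
Definition zeta_nat (n : nat) : R :=
  match n with
  | O => - / 2
  | _ => Series (fun j : nat => / (INR (S j)) ^ n)
  end.

(* theta_shift i = theta_{i-1} = zeta(2i) * (2^{2i+1} - 4), i >= 0,
   i.e. theta_m = zeta(2m+2) (2^{2m+3} - 4) with m = i - 1 >= -1. *)
Definition theta_shift (i : nat) : R :=
  zeta_nat (2 * i) * (2 ^ (2 * i + 1) - 4).

(* Main.v *)
Require Import Defs.
From Stdlib Require Import Reals Lra Lia.
From Coquelicot Require Import Coquelicot.
Open Scope R_scope.


Lemma exp_pow_n (a : R) (j : nat) : exp a ^ j = exp (INR j * a).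
Proof.
  induction j as [|j IH].
  - simpl. rewrite Rmult_0_l, exp_0. reflexivity.
  - rewrite <- tech_pow_Rmult, IH, <- exp_plus, S_INR. f_equal. ring.
Qed.

Lemma exp_ge_pow (y : R) (i : nat) : 0 <= y -> (y / INR (S i)) ^ (S i) <= exp y.
Proof.
  intros Hy.
  assert (Hi : 0 < INR (S i)) by (apply lt_0_INR; lia).
  replace (exp y) with (exp (y / INR (S i)) ^ (S i)).
  2:{ rewrite exp_pow_n. f_equal. field. lra. }
  apply pow_incr. split.
  - apply Rdiv_le_0_compat; lra.
  - pose proof (exp_ineq1_le (y / INR (S i))). lra.
Qed.

Lemma poly_exp_bound (y : R) (i : nat) : 0 < y ->
  y ^ i * exp (- y) <= INR (S i) ^ (S i) / y.
Proof.
  intros Hy.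
  assert (Hi : 0 < INR (S i)) by (apply lt_0_INR; lia).
  pose proof (exp_ge_pow y i (Rlt_le _ _ Hy)) as H.
  assert (Hp : 0 < (y / INR (S i)) ^ S i) by (apply pow_lt; apply Rdiv_lt_0_compat; lra).
  rewrite exp_Ropp.
  apply Rle_trans with (y ^ i * / ((y / INR (S i)) ^ S i)).
  - apply Rmult_le_compat_l. apply pow_le; lra.
    apply Rinv_le_contravar; lra.
  - right. unfold Rdiv. rewrite Rpow_mult_distr, pow_inv, <- (tech_pow_Rmult y i). field. repeat split; try lra; apply pow_nonzero; lra.
Qed.

Lemma poly_exp_lim (i : nat) : is_lim (fun y => y ^ i * exp (- y)) p_infty 0.
Proof.
  apply is_lim_spec. intros eps. simpl.
  assert (Hi : 0 < INR (S i) ^ S i) by (apply pow_lt, lt_0_INR; lia).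
  exists (Rmax 1 (INR (S i) ^ S i / eps * 2)). intros y Hy.
  pose proof (Rmax_l 1 (INR (S i) ^ S i / eps * 2)).
  pose proof (Rmax_r 1 (INR (S i) ^ S i / eps * 2)).
  pose proof (cond_pos eps).
  assert (Hy0 : 0 < y) by lra.
  pose proof (poly_exp_bound y i Hy0) as B.
  assert (0 <= y ^ i * exp (- y)).
  { apply Rmult_le_pos. apply pow_le; lra. left; apply exp_pos. }
  rewrite Rminus_0_r, Rabs_pos_eq by lra.
  apply Rle_lt_trans with (1 := B).
  apply Rlt_le_trans with (INR (S i) ^ S i / (INR (S i) ^ S i / eps * 2)).
  - unfold Rdiv. apply Rmult_lt_compat_l; [lra|]. apply Rinv_lt_contravar.
    + assert (Hq: 0 < INR (S i)^S i / eps * 2) by (apply Rmult_lt_0_compat; [apply Rdiv_lt_0_compat|]; lra).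
      apply Rmult_lt_0_compat; lra.
    + lra.
  - assert (E: INR (S i) ^ S i / (INR (S i) ^ S i / eps * 2) = eps / 2) by (field; split; lra).
    rewrite E. lra.
Qed.


Definition Pt (p : nat) (y : R) : R := sum_f_R0 (fun i => y ^ i / INR (Factorial.fact i)) p.

Lemma Pt_0 p : Pt p 0 = 1.
Proof.
  induction p as [|p IH]; unfold Pt in *.
  - simpl. field.
  - rewrite tech5, IH. simpl pow. rewrite Rmult_0_l. unfold Rdiv. rewrite Rmult_0_l. ring.
Qed.

Lemma Pt_nonneg p y : 0 <= y -> 0 <= Pt p y.
Proof.
  intros Hy. induction p as [|p IH]; unfold Pt in *.
  - simpl. lra.
  - rewrite tech5. apply Rplus_le_le_0_compat; [exact IH|]. apply Rdiv_le_0_compat. apply (pow_le y (S p)); lra. apply INR_fact_lt_0.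
Qed.

Lemma Pt_derive p y : is_derive (Pt p) y (Pt p y - y ^ p / INR (Factorial.fact p)).
Proof.
  induction p as [|p IH].
  - apply is_derive_ext with (fun _ => 1).
    + intros t. unfold Pt. simpl. field.
    + unfold Pt. simpl. auto_derive; [trivial| field].
  - apply is_derive_ext with (fun t => Pt p t + t ^ (S p) / INR (Factorial.fact (S p))).
    + intros t. reflexivity.
    + replace (Pt (S p) y - y ^ S p / INR (Factorial.fact (S p))) with
        ((Pt p y - y ^ p / INR (Factorial.fact p)) + (INR (S p) * y ^ p / INR (Factorial.fact (S p)))).
      * apply (is_derive_plus (Pt p) (fun t => t ^ S p / INR (Factorial.fact (S p)))); [exact IH|].
        auto_derive; [trivial|].
        change (match p with 0%nat => 1 | S _ => INR p + 1 end) with (INR (S p)).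
        change (Factorial.fact p + p * Factorial.fact p)%nat with (Factorial.fact (S p)).
        field. apply INR_fact_neq_0.
      * unfold Pt. rewrite tech5. change (Factorial.fact (S p)) with (S p * Factorial.fact p)%nat.
        rewrite mult_INR. field. split. apply INR_fact_neq_0. apply not_0_INR. lia.
Qed.

Lemma cont_R (f : R -> R) x : ex_derive f x -> continuous f x.
Proof. intros H. apply (@ex_derive_continuous R_AbsRing R_NormedModule). exact H. Qed.

Lemma exp_mom p c b : 0 < c ->
  is_RInt (fun u => u ^ p * exp (- (c * u))) 0 b
    (INR (Factorial.fact p) / c ^ (S p) * (1 - exp (- (c * b)) * Pt p (c * b))).
Proof.
  intros Hc.
  set (F := fun u => - (INR (Factorial.fact p) / c ^ (S p)) * (exp (- (c * u)) * Pt p (c * u))).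
  replace (INR (Factorial.fact p) / c ^ (S p) * (1 - exp (- (c * b)) * Pt p (c * b)))
    with (minus (F b) (F 0)).
  2:{ unfold F, minus, plus, opp; simpl. rewrite Rmult_0_r, Ropp_0, exp_0, Pt_0. ring. }
  apply (@is_RInt_derive R_CompleteNormedModule F (fun u => u ^ p * exp (- (c * u)))). 
  - intros u _. unfold F.
    pose proof (Pt_derive p (c * u)) as D.
    auto_derive.
    + exists (Pt p (c * u) - (c * u) ^ p / INR (Factorial.fact p)). exact D.
    + replace (Derive (fun x : R => Pt p x) (c * u)) with (Pt p (c * u) - (c * u) ^ p / INR (Factorial.fact p)) by (symmetry; apply (is_derive_unique _ _ _ D)).
      rewrite Rpow_mult_distr. simpl. field. split. apply INR_fact_neq_0.
      split. apply pow_nonzero; lra. lra.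
  - intros u _. apply cont_R. auto_derive. trivial.
Qed.

Lemma r_lim p : is_lim (fun y => exp (- y) * Pt p y) p_infty 0.
Proof.
  induction p as [|p IH].
  - apply is_lim_ext with (fun y => y ^ 0 * exp (- y)).
    + intros y. unfold Pt. simpl. field.
    + apply poly_exp_lim.
  - apply is_lim_ext with (fun y => exp (- y) * Pt p y + / INR (Factorial.fact (S p)) * (y ^ (S p) * exp (- y))).
    + intros y. unfold Pt. rewrite tech5. field. apply INR_fact_neq_0.
    + replace (Finite 0) with (Finite (0 + / INR (Factorial.fact (S p)) * 0)) by (f_equal; ring).
      apply is_lim_plus'; [exact IH|].
      apply (is_lim_scal_l (fun y => y ^ S p * exp (- y)) (/ INR (Factorial.fact (S p))) p_infty 0).
      apply poly_exp_lim.
Qed.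


Definition Sln (N : nat) (y : R) : R :=
  sum_f_R0 (fun m => (-1) ^ m * y ^ (S m) / INR (S m)) N.

Lemma Sln_0 N : Sln N 0 = 0.
Proof.
  induction N as [|N IH]; unfold Sln in *.
  - simpl. field.
  - rewrite tech5, IH. simpl pow. field. apply not_0_INR. lia.
Qed.

Lemma Sln_derive N t : is_derive (Sln N) t (sum_f_R0 (fun m => (- t) ^ m) N).
Proof.
  induction N as [|N IH].
  - unfold Sln. simpl. auto_derive; [trivial|]. field.
  - apply is_derive_ext with (fun s => Sln N s + (-1) ^ (S N) * s ^ (S (S N)) / INR (S (S N))).
    + intros s. unfold Sln. rewrite tech5. reflexivity.
    + rewrite tech5.
      apply (is_derive_plus (Sln N) (fun s => (-1) ^ (S N) * s ^ (S (S N)) / INR (S (S N)))); [exact IH|].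
      auto_derive; [trivial|].
      replace (- t) with ((-1) * t) by ring. rewrite Rpow_mult_distr.
      change (match N with 0%nat => 1 | S _ => INR N + 1 end) with (INR (S N)).
      simpl pow. field. pose proof (pos_INR (S N)). lra.
Qed.

Lemma cont_pt_R (f : R -> R) x : ex_derive f x -> continuity_pt f x.
Proof. intros H. apply continuity_pt_filterlim. apply cont_R. exact H. Qed.

Lemma ln_rem N y : 0 <= y <= 1 -> Rabs (ln (1 + y) - Sln N y) <= y ^ (S (S N)).
Proof.
  intros Hy.
  set (f := fun t => ln (1 + t) - Sln N t).
  destruct (MVT_gen f 0 y (fun t => (- t) ^ (S N) / (1 + t))) as [c [Hc Hm]].
  - intros t Ht. rewrite Rmin_left in Ht by lra. rewrite Rmax_right in Ht by lra.
    unfold f. pose proof (Sln_derive N t) as D.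
    apply is_derive_ext with (fun s => ln (1 + s) - Sln N s); [reflexivity|].
    replace ((- t) ^ S N / (1 + t)) with (1 / (1 + t) - sum_f_R0 (fun m => (- t) ^ m) N).
    + apply (is_derive_minus (fun s => ln (1 + s)) (Sln N)); [|exact D].
      auto_derive; [lra| field; lra].
    + rewrite tech3 by lra. field. lra.
  - intros t Ht. rewrite Rmin_left in Ht by lra. rewrite Rmax_right in Ht by lra.
    apply cont_pt_R. unfold f.
    exists (1 / (1 + t) - sum_f_R0 (fun m => (- t) ^ m) N).
    apply (is_derive_minus (fun s => ln (1 + s)) (Sln N)); [|apply Sln_derive].
    auto_derive; [lra| field; lra].
  - rewrite Rmin_left in Hc by lra. rewrite Rmax_right in Hc by lra.
    unfold f in Hm. rewrite Sln_0, Rplus_0_r, ln_1, Rminus_0_r, Rminus_0_r in Hm.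
    rewrite Hm. rewrite Rabs_mult, Rabs_div by lra.
    rewrite (Rabs_pos_eq (1 + c)) by lra. rewrite Rminus_0_r, (Rabs_pos_eq y) by lra.
    rewrite <- RPow_abs, Rabs_Ropp, (Rabs_pos_eq c) by lra.
    rewrite <- (tech_pow_Rmult y (S N)), Rmult_comm.
    apply Rmult_le_compat_l; [lra|].
    apply Rle_trans with (c ^ S N).
    + unfold Rdiv. rewrite <- (Rmult_1_r (c ^ S N)) at 2. apply Rmult_le_compat_l.
      apply pow_le; lra. rewrite <- Rinv_1. apply Rinv_le_contravar; lra.
    + apply pow_incr. lra.
Qed.

Lemma L_rem N u : 0 <= u ->
  Rabs (ln (1 + exp (- u / 2)) -
        sum_f_R0 (fun m => (-1) ^ m / INR (S m) * exp (- (INR (S m) / 2 * u))) N)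
  <= exp (- (INR (S (S N)) / 2 * u)).
Proof.
  intros Hu.
  assert (Hy : 0 <= exp (- u / 2) <= 1).
  { split. left; apply exp_pos. rewrite <- exp_0. destruct (Req_dec u 0) as [->|Hu0]. right; f_equal; field. left; apply exp_increasing; lra. }
  pose proof (ln_rem N _ Hy) as H.
  rewrite exp_pow_n in H.
  replace (- (INR (S (S N)) / 2 * u)) with (INR (S (S N)) * (- u / 2)) by field.
  replace (sum_f_R0 (fun m => (-1) ^ m / INR (S m) * exp (- (INR (S m) / 2 * u))) N)
    with (Sln N (exp (- u / 2))); [exact H|].
  unfold Sln. apply sum_eq. intros m _. rewrite exp_pow_n.
  replace (- (INR (S m) / 2 * u)) with (INR (S m) * (- u / 2)) by field.
  field. apply not_0_INR. lia.
Qed.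


Definition za (s : nat) (j : nat) : R := / INR (S j) ^ s.
Definition Zs (s : nat) : R := Series (za s).

Lemma za_pos s j : 0 < za s j.
Proof. unfold za. apply Rinv_0_lt_compat, pow_lt, lt_0_INR. lia. Qed.

Lemma za_bound q N : sum_f_R0 (za (S (S q))) N <= 2 - / INR (S N).
Proof.
  induction N as [|N IH].
  - simpl sum_f_R0. unfold za. change (INR 1) with 1. rewrite pow1, Rinv_1. lra.
  - rewrite tech5.
    assert (H1 : za (S (S q)) (S N) <= / INR (S N) - / INR (S (S N))).
    { unfold za.
      assert (HN : 1 <= INR (S N)) by (apply (le_INR 1); lia).
      assert (HS : INR (S (S N)) = INR (S N) + 1) by (apply S_INR).
      apply Rle_trans with (/ (INR (S N) * INR (S (S N)))).
      - apply Rinv_le_contravar. nra.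
        apply Rle_trans with (INR (S (S N)) ^ 2).
        + replace (INR (S (S N)) ^ 2) with (INR (S (S N)) * INR (S (S N))) by ring. nra.
        + apply Rle_pow. lra. lia.
      - right. rewrite HS. field. lra. }
    lra.
Qed.

Lemma za_ex q : ex_series (za (S (S q))).
Proof.
  apply ex_series_Reals_1. apply growing_cv.
  - intros n. simpl. pose proof (za_pos (S (S q)) (S n)). lra.
  - exists 2. intros x [i ->]. pose proof (za_bound q i).
    pose proof (pos_INR (S i)). assert (0 < / INR (S i)) by (apply Rinv_0_lt_compat, lt_0_INR; lia). lra.
Qed.

Lemma za_lim q : is_lim_seq (fun N => sum_f_R0 (za (S (S q))) N) (Zs (S (S q))).
Proof.
  pose proof (Series_correct _ (za_ex q)) as H.
  apply is_lim_seq_ext with (sum_n (za (S (S q)))).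
  - intros n. apply sum_n_Reals.
  - exact H.
Qed.

Lemma za_odd s m : za s (2 * m + 1) = / 2 ^ s * za s m.
Proof.
  unfold za. replace (S (2 * m + 1)) with (2 * S m)%nat by lia.
  rewrite mult_INR, Rpow_mult_distr. simpl (INR 2).
  rewrite Rinv_mult. reflexivity.
Qed.

Lemma alt_sum s M :
  sum_f_R0 (fun m => (-1) ^ m * za s m) (2 * M + 1) =
  sum_f_R0 (za s) (2 * M + 1) - 2 * / 2 ^ s * sum_f_R0 (za s) M.
Proof.
  induction M as [|M IH].
  - simpl. pose proof (za_odd s 0) as H. simpl in H. rewrite H. ring.
  - replace (2 * S M + 1)%nat with (S (S (2 * M + 1))) by lia.
    rewrite !tech5, IH.
    replace (S (2 * M + 1)) with (2 * S M)%nat by lia.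
    rewrite pow_1_even, pow_1_odd.
    replace (S (2 * S M)) with (2 * S M + 1)%nat by lia.
    rewrite za_odd. ring.
Qed.

Lemma alt_lim q :
  is_lim_seq (fun M => sum_f_R0 (fun m => (-1) ^ m * za (S (S q)) m) (2 * M + 1))
    ((1 - 2 * / 2 ^ (S (S q))) * Zs (S (S q))).
Proof.
  set (s := S (S q)).
  apply is_lim_seq_ext with (fun M => sum_f_R0 (za s) (2 * M + 1) - 2 * / 2 ^ s * sum_f_R0 (za s) M).
  - intros M. symmetry. apply alt_sum.
  - replace ((1 - 2 * / 2 ^ s) * Zs s) with (Zs s - 2 * / 2 ^ s * Zs s) by ring.
    apply is_lim_seq_minus'.
    + apply (is_lim_seq_subseq (fun N => sum_f_R0 (za s) N) (Zs s) (fun M => (2 * M + 1)%nat)).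
      * intros P [N HN]. exists N. intros n Hn. apply HN. lia.
      * apply za_lim.
    + apply (is_lim_seq_scal_l _ (2 * / 2 ^ s) (Zs s)). apply za_lim.
Qed.


Definition L2 (u : R) : R := ln (1 + exp (- u / 2)).
Definition TN (N : nat) (u : R) : R :=
  sum_f_R0 (fun m => (-1) ^ m / INR (S m) * exp (- (INR (S m) / 2 * u))) N.
Definition Ecl (p : nat) (c b : R) : R :=
  INR (Factorial.fact p) / c ^ (S p) * (1 - exp (- (c * b)) * Pt p (c * b)).
Definition VN (p N : nat) (b : R) : R :=
  sum_f_R0 (fun m => (-1) ^ m / INR (S m) * Ecl p (INR (S m) / 2) b) N.

Lemma is_RInt_sum (g : nat -> R -> R) (v : nat -> R) a b N :
  (forall m, is_RInt (g m) a b (v m)) ->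
  is_RInt (fun u => sum_f_R0 (fun m => g m u) N) a b (sum_f_R0 v N).
Proof.
  intros H. induction N as [|N IH].
  - simpl. apply H.
  - rewrite tech5.
    apply (is_RInt_ext (fun u => plus (sum_f_R0 (fun m => g m u) N) (g (S N) u))).
    + intros x _. rewrite tech5. reflexivity.
    + apply (is_RInt_plus (V := R_NormedModule)); [exact IH | apply H].
Qed.

Lemma TN_RInt p N b :
  is_RInt (fun u => u ^ p * TN N u) 0 b (VN p N b).
Proof.
  apply (is_RInt_ext (fun u => sum_f_R0 (fun m => u ^ p * ((-1) ^ m / INR (S m) * exp (- (INR (S m) / 2 * u)))) N)).
  - intros x _. unfold TN. rewrite scal_sum. apply sum_eq. intros; ring.
  - apply is_RInt_sum. intros m.
    apply (is_RInt_ext (fun u => scal ((-1) ^ m / INR (S m)) (u ^ p * exp (- (INR (S m) / 2 * u))))).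
    + intros x _. unfold scal; simpl; unfold mult; simpl. ring.
    + apply (is_RInt_scal (V := R_NormedModule)). apply exp_mom.
      apply Rdiv_lt_0_compat; [apply lt_0_INR; lia | lra].
Qed.

Lemma cont_L2p p u : continuous (fun u => u ^ p * L2 u) u.
Proof.
  apply cont_R. unfold L2. auto_derive. pose proof (exp_pos (- u / 2)). lra.
Qed.

Lemma ex_L2p p b : ex_RInt (fun u => u ^ p * L2 u) 0 b.
Proof. apply (ex_RInt_continuous (V := R_CompleteNormedModule)). intros z _. apply cont_L2p. Qed.

Lemma Ecl_le p c b : 0 < c -> 0 <= b -> Ecl p c b <= INR (Factorial.fact p) / c ^ (S p).
Proof.
  intros Hc Hb. unfold Ecl.
  assert (0 <= exp (- (c * b)) * Pt p (c * b)).
  { apply Rmult_le_pos. left; apply exp_pos. apply Pt_nonneg. nra. }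
  assert (0 < INR (Factorial.fact p) / c ^ S p).
  { apply Rdiv_lt_0_compat. apply INR_fact_lt_0. apply pow_lt; lra. }
  rewrite <- (Rmult_1_r (INR (Factorial.fact p) / c ^ S p)) at 2.
  apply Rmult_le_compat_l; lra.
Qed.

Lemma err_bound p N b : 0 <= b ->
  Rabs (RInt (fun u => u ^ p * L2 u) 0 b - VN p N b)
  <= INR (Factorial.fact p) / (INR (S (S N)) / 2) ^ (S p).
Proof.
  intros Hb.
  assert (Hc : 0 < INR (S (S N)) / 2) by (apply Rdiv_lt_0_compat; [apply lt_0_INR; lia | lra]).
  apply Rle_trans with (Ecl p (INR (S (S N)) / 2) b); [|apply Ecl_le; lra].
  pose proof (RInt_correct _ _ _ (ex_L2p p b)) as H1.
  pose proof (TN_RInt p N b) as H2.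
  pose proof (is_RInt_minus (V := R_NormedModule) _ _ _ _ _ _ H1 H2) as H3.
  refine (norm_RInt_le (V := R_NormedModule)
    (fun y => minus ((fun u : R => u ^ p * L2 u) y) ((fun u : R => u ^ p * TN N u) y))
    (fun u => u ^ p * exp (- (INR (S (S N)) / 2 * u))) 0 b _ _ Hb _ H3 _).
  - intros x Hx. unfold minus, plus, opp; simpl.
    change (norm ?z) with (Rabs z).
    replace (x ^ p * L2 x + - (x ^ p * TN N x)) with (x ^ p * (L2 x - TN N x)) by ring.
    rewrite Rabs_mult, (Rabs_pos_eq (x ^ p)) by (apply pow_le; lra).
    apply Rmult_le_compat_l; [apply pow_le; lra|].
    apply L_rem. lra.
  - apply exp_mom. exact Hc.
Qed.

Lemma VN_split p N b :
  VN p N b =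
  INR (Factorial.fact p) * 2 ^ (S p) * sum_f_R0 (fun m => (-1) ^ m * za (S (S p)) m) N
  - INR (Factorial.fact p) * 2 ^ (S p) *
    sum_f_R0 (fun m => (-1) ^ m * za (S (S p)) m *
       (exp (- (INR (S m) / 2 * b)) * Pt p (INR (S m) / 2 * b))) N.
Proof.
  assert (T : forall m, (-1) ^ m / INR (S m) * Ecl p (INR (S m) / 2) b =
     INR (Factorial.fact p) * 2 ^ (S p) * ((-1) ^ m * za (S (S p)) m)
     - INR (Factorial.fact p) * 2 ^ (S p) * ((-1) ^ m * za (S (S p)) m *
       (exp (- (INR (S m) / 2 * b)) * Pt p (INR (S m) / 2 * b)))).
  { intros m. unfold Ecl, za.
    replace ((INR (S m) / 2) ^ S p) with (INR (S m) ^ S p / 2 ^ S p)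
      by (unfold Rdiv; rewrite Rpow_mult_distr, pow_inv; reflexivity).
    rewrite <- (tech_pow_Rmult (INR (S m)) (S p)).
    assert (0 < INR (S m)) by (apply lt_0_INR; lia).
    assert (0 < INR (S m) ^ S p) by (apply pow_lt; lra).
    assert (0 < 2 ^ S p) by (apply pow_lt; lra).
    field. repeat split; lra. }
  induction N as [|N IH].
  - unfold VN. exact (T 0%nat).
  - unfold VN in *. rewrite !tech5, IH, T. ring.
Qed.

Lemma za_le1 s m : za s m <= 1.
Proof.
  unfold za. rewrite <- Rinv_1. apply Rinv_le_contravar. lra.
  rewrite <- (pow1 s). apply pow_incr. split. lra. apply (le_INR 1). lia.
Qed.

Lemma mom_L2 p :
  is_lim (fun b => RInt (fun u => u ^ p * L2 u) 0 b) p_infty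
    (INR (Factorial.fact p) * 2 ^ (S p) * ((1 - 2 * / 2 ^ (S (S p))) * Zs (S (S p)))).
Proof.
  set (K := INR (Factorial.fact p) * 2 ^ (S p)).
  set (eta := (1 - 2 * / 2 ^ (S (S p))) * Zs (S (S p))).
  assert (HK : 0 < K) by (apply Rmult_lt_0_compat; [apply INR_fact_lt_0 | apply pow_lt; lra]).
  apply is_lim_spec. intros eps. simpl.
  set (e3 := eps / 3).
  assert (He3 : 0 < e3) by (unfold e3; pose proof (cond_pos eps); lra).
  pose proof (alt_lim p) as HA. apply is_lim_seq_spec in HA.
  destruct (HA (mkposreal (e3 / K) (Rdiv_lt_0_compat _ _ He3 HK))) as [M0 HM0].
  simpl in HM0.
  destruct (INR_archimed 1 (K / e3)) as [n1 Hn1]; [lra|].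
  set (M := Nat.max M0 n1).
  set (N := (2 * M + 1)%nat).
  assert (HAN : Rabs (sum_f_R0 (fun m => (-1) ^ m * za (S (S p)) m) N - eta) < e3 / K).
  { apply HM0. unfold M. lia. }
  assert (HSN : K / e3 < INR (S (S N))).
  { apply Rlt_le_trans with (INR n1). lra. apply le_INR. unfold N, M. lia. }
  assert (HSN0 : 1 <= INR (S (S N))) by (apply (le_INR 1); lia).
  assert (Herr : INR (Factorial.fact p) / (INR (S (S N)) / 2) ^ (S p) < e3).
  { replace (INR (Factorial.fact p) / (INR (S (S N)) / 2) ^ (S p)) with (K / INR (S (S N)) ^ (S p)).
    2:{ unfold K. replace ((INR (S (S N)) / 2) ^ S p) with (INR (S (S N)) ^ S p / 2 ^ S p)
          by (unfold Rdiv; rewrite Rpow_mult_distr, pow_inv; reflexivity).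
        field. split. apply pow_nonzero; lra. apply pow_nonzero; lra. }
    apply Rle_lt_trans with (K / INR (S (S N))).
    - unfold Rdiv. apply Rmult_le_compat_l; [lra|]. apply Rinv_le_contravar; [lra|].
      rewrite <- (pow_1 (INR (S (S N)))) at 1. apply Rle_pow; [lra|lia].
    - apply (Rmult_lt_reg_r (INR (S (S N)))); [lra|].
      unfold Rdiv. rewrite Rmult_assoc, Rinv_l by lra.
      apply (Rmult_lt_reg_l (/ e3)). apply Rinv_0_lt_compat; lra.
      replace (/ e3 * (e3 * INR (S (S N)))) with (INR (S (S N))) by (field; lra).
      lra. }
  assert (HSN1 : 0 < INR (S N)) by (apply lt_0_INR; lia).
  pose proof (r_lim p) as HR. apply is_lim_spec in HR.
  assert (Hd : 0 < e3 / (K * INR (S N))) by (apply Rdiv_lt_0_compat; [lra | apply Rmult_lt_0_compat; lra]).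
  destruct (HR (mkposreal _ Hd)) as [Y HY]. simpl in HY.
  change (match N with 0%nat => 1 | S _ => INR N + 1 end) with (INR (S N)) in HY.
  exists (2 * Rabs Y + 1). intros b Hb.
  pose proof (Rabs_pos Y). pose proof (Rle_abs Y).
  assert (Hb0 : 0 <= b) by lra.
  pose proof (err_bound p N b Hb0) as E1.
  rewrite VN_split in E1. fold K in E1.
  set (A := sum_f_R0 (fun m => (-1) ^ m * za (S (S p)) m) N) in *.
  set (T := sum_f_R0 (fun m => (-1) ^ m * za (S (S p)) m *
       (exp (- (INR (S m) / 2 * b)) * Pt p (INR (S m) / 2 * b))) N) in *.
  assert (HT : Rabs T <= e3 / K).
  { apply Rle_trans with (1 := sum_f_R0_triangle _ N).
    apply Rle_trans with (sum_f_R0 (fun _ => e3 / (K * INR (S N))) N).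
    - apply sum_Rle. intros m Hm.
      rewrite !Rabs_mult, pow_1_abs, Rabs_pos_eq by (left; apply za_pos).
      assert (Hm1 : 1 <= INR (S m)) by (apply (le_INR 1); lia).
      assert (Hy : Y < INR (S m) / 2 * b) by nra.
      pose proof (HY _ Hy) as HYm. rewrite Rminus_0_r in HYm.
      pose proof (za_le1 (S (S p)) m). pose proof (za_pos (S (S p)) m).
      pose proof (Rabs_pos (exp (- (INR (S m) / 2 * b)) * Pt p (INR (S m) / 2 * b))).
      rewrite <- Rabs_mult.
      set (rr := Rabs (exp (- (INR (S m) / 2 * b)) * Pt p (INR (S m) / 2 * b))) in *.
      set (dd := e3 / (K * INR (S N))) in *. nra.
    - rewrite sum_cte. right. field. split; lra. }
  replace (RInt (fun u => u ^ p * L2 u) 0 b - K * eta) with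
    ((RInt (fun u => u ^ p * L2 u) 0 b - (K * A - K * T)) - K * T + K * (A - eta)) by ring.
  apply Rle_lt_trans with (Rabs (RInt (fun u => u ^ p * L2 u) 0 b - (K * A - K * T)) + Rabs (K * T) + Rabs (K * (A - eta))).
  { eapply Rle_trans. apply Rabs_triang. apply Rplus_le_compat_r.
    eapply Rle_trans. apply Rabs_triang. rewrite Rabs_Ropp. lra. }
  rewrite !Rabs_mult, (Rabs_pos_eq K) by lra.
  assert (K * Rabs T <= e3).
  { apply Rle_trans with (K * (e3 / K)). apply Rmult_le_compat_l; lra. right; field; lra. }
  assert (K * Rabs (A - eta) < e3).
  { apply Rlt_le_trans with (K * (e3 / K)). apply Rmult_lt_compat_l; lra. right; field; lra. }
  unfold e3 in *. lra.
Qed.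


Definition Mom (p : nat) : R :=
  -2 * (INR (Factorial.fact p) * 2 ^ (S p) * ((1 - 2 * / 2 ^ (S (S p))) * Zs (S (S p)))).

Lemma cont_fLp p u : continuous (fun u => u ^ p * fL u) u.
Proof.
  apply cont_R. unfold fL. auto_derive. pose proof (exp_pos (- u / 2)). lra.
Qed.

Lemma ex_fLp p a b : ex_RInt (fun u => u ^ p * fL u) a b.
Proof. apply (ex_RInt_continuous (V := R_CompleteNormedModule)). intros z _. apply cont_fLp. Qed.

Lemma mom_fL p : is_lim (fun b => RInt (fun u => u ^ p * fL u) 0 b) p_infty (Mom p).
Proof.
  apply is_lim_ext with (fun b => -2 * RInt (fun u => u ^ p * L2 u) 0 b).
  - intros b. rewrite <- (RInt_scal (V := R_CompleteNormedModule)) by apply ex_L2p.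
    apply RInt_ext. intros x _. unfold scal; simpl; unfold mult; simpl. unfold fL, L2. ring.
  - apply (is_lim_scal_l _ (-2) p_infty _ (mom_L2 p)).
Qed.

Lemma is_lim_sum (f : nat -> R -> R) (l : nat -> R) N :
  (forall j, is_lim (f j) p_infty (l j)) ->
  is_lim (fun b => sum_f_R0 (fun j => f j b) N) p_infty (sum_f_R0 l N).
Proof.
  intros H. induction N as [|N IH].
  - simpl. apply H.
  - rewrite tech5. apply is_lim_ext with (fun b => sum_f_R0 (fun j => f j b) N + f (S N) b).
    + intros b. rewrite tech5. reflexivity.
    + apply is_lim_plus'; [exact IH | apply H].
Qed.

Lemma lim_poly (c : nat -> R) N :
  is_lim (fun b => RInt (fun u => sum_f_R0 (fun j => c j * u ^ j) N * fL u) 0 b) p_infty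
    (sum_f_R0 (fun j => c j * Mom j) N).
Proof.
  apply is_lim_ext with (fun b => sum_f_R0 (fun j => c j * RInt (fun u => u ^ j * fL u) 0 b) N).
  - intros b. symmetry. apply is_RInt_unique.
    apply (is_RInt_ext (fun u => sum_f_R0 (fun j => c j * (u ^ j * fL u)) N)).
    + intros x _. rewrite (Rmult_comm (sum_f_R0 _ N)), scal_sum. apply sum_eq. intros; ring.
    + apply (is_RInt_sum (fun j u => c j * (u ^ j * fL u))). intros j.
      apply (is_RInt_scal (V := R_NormedModule) (fun u => u ^ j * fL u) 0 b (c j)).
      apply (RInt_correct (V := R_CompleteNormedModule)). apply ex_fLp.
  - apply (is_lim_sum (fun j b => c j * RInt (fun u => u ^ j * fL u) 0 b)).
    intros j. apply (is_lim_scal_l _ (c j) p_infty _ (mom_fL j)).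
Qed.


Lemma fL_neg y : fL (- y) = fL y - y.
Proof.
  unfold fL.
  replace (1 + exp (- - y / 2)) with (exp (y / 2) * (1 + exp (- y / 2))).
  - rewrite ln_mult, ln_exp. field.
    apply exp_pos. pose proof (exp_pos (- y / 2)). lra.
  - rewrite Rmult_plus_distr_l, <- exp_plus.
    replace (y / 2 + - y / 2) with 0 by field. rewrite exp_0.
    replace (- - y / 2) with (y / 2) by field. ring.
Qed.

Lemma pow_opp_odd k a : (- a) ^ (2 * k + 1) = - (a ^ (2 * k + 1)).
Proof.
  replace (- a) with ((-1) * a) by ring. rewrite Rpow_mult_distr.
  replace (2 * k + 1)%nat with (S (2 * k)) by lia. rewrite pow_1_odd. ring.
Qed.

Lemma pow_opp_even k a : (- a) ^ (2 * k) = a ^ (2 * k).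
Proof.
  replace (- a) with ((-1) * a) by ring. rewrite Rpow_mult_distr, pow_1_even. ring.
Qed.

Lemma cont_gen (f : R -> R) a b : (forall z, ex_derive f z) -> ex_RInt f a b.
Proof.
  intros H. apply (ex_RInt_continuous (V := R_CompleteNormedModule)). intros z _. apply cont_R, H.
Qed.

Lemma exd_fL z : ex_derive fL z.
Proof. unfold fL. auto_derive. pose proof (exp_pos (- z / 2)). lra. Qed.

Lemma exd_phi1 (k : nat) (x : R) z : ex_derive (fun u : R => (u - x) ^ (2 * k + 1) * fL u) z.
Proof. apply ex_derive_mult. auto_derive; trivial. apply exd_fL. Qed.
Lemma exd_phi2 (k : nat) (x : R) z : ex_derive (fun u : R => (u + x) ^ (2 * k + 1) * fL u) z.
Proof. apply ex_derive_mult. auto_derive; trivial. apply exd_fL. Qed.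

Lemma fin_id (k : nat) (x : R) b :
  RInt (fun l : R => l ^ (2 * k + 1) * (fL (l + x) - fL (l - x))) 0 b =
  RInt (fun u : R => (u - x) ^ (2 * k + 1) * fL u) 0 (b + x)
  - RInt (fun u : R => (u + x) ^ (2 * k + 1) * fL u) 0 (b - x)
  - RInt (fun y => (y - x) ^ (2 * k + 1) * y) 0 x.
Proof.
  pose proof (exd_phi1 k x) as exd_phi1.
  pose proof (exd_phi2 k x) as exd_phi2.
  set (n := (2 * k + 1)%nat) in *.
  set (G := fun l : R => l ^ n * (fL (l + x) - fL (l - x))).
  set (phi1 := fun u : R => (u - x) ^ n * fL u) in *.
  set (phi2 := fun u : R => (u + x) ^ n * fL u) in *.
  set (Qp := RInt (fun y => (y - x) ^ n * y) 0 x).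

  assert (E1 : RInt (fun l => l ^ n * fL (l + x)) 0 b = RInt phi1 x (b + x)).
  { rewrite <- (Rmult_1_l b) at 2. replace x with (1 * 0 + x) at 1 by ring.
    rewrite <- (RInt_comp_lin (V := R_CompleteNormedModule) phi1 1 x 0 b).
    - apply RInt_ext. intros y _. unfold phi1, scal; simpl; unfold mult; simpl.
      replace (1 * y + x - x) with y by ring. replace (1 * y + x) with (y + x) by ring. ring.
    - apply cont_gen, exd_phi1. }
  assert (E2 : RInt (fun l => l ^ n * fL (l - x)) 0 b = RInt phi2 (- x) (b - x)).
  { replace (- x) with (1 * 0 + - x) by ring. replace (b - x) with (1 * b + - x) by ring.
    rewrite <- (RInt_comp_lin (V := R_CompleteNormedModule) phi2 1 (- x) 0 b).
    - apply RInt_ext. intros y _. unfold phi2, scal; simpl; unfold mult; simpl.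
      replace (1 * y + - x + x) with y by ring. replace (1 * y + - x) with (y - x) by ring. ring.
    - apply cont_gen, exd_phi2. }
  assert (E3 : RInt phi2 (- x) 0 = - (RInt phi1 0 x - Qp)).
  { assert (H : RInt (fun y => scal (-1) (phi2 (-1 * y + 0))) 0 x = RInt phi2 (-1 * 0 + 0) (-1 * x + 0)).
    { apply (RInt_comp_lin (V := R_CompleteNormedModule)). apply cont_gen, exd_phi2. }
    replace (-1 * 0 + 0) with 0 in H by ring. replace (-1 * x + 0) with (- x) in H by ring.
    rewrite <- (opp_RInt_swap (V := R_CompleteNormedModule) phi2 (- x) 0) in H by (apply cont_gen, exd_phi2).
    change (opp (RInt phi2 (- x) 0)) with (- RInt phi2 (- x) 0) in H.
    replace (RInt phi2 (- x) 0) with (- RInt (fun y : R => scal (-1) (phi2 (-1 * y + 0))) 0 x) by lra.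
    f_equal. unfold Qp.
    rewrite <- (RInt_minus (V := R_CompleteNormedModule)).
    - apply RInt_ext. intros y _. unfold phi1, phi2, scal, minus, plus, opp; simpl; unfold mult; simpl.
      replace (-1 * y + 0) with (- y) by ring. rewrite fL_neg.
      replace (- y + x) with (- (y - x)) by ring. unfold n. rewrite pow_opp_odd. ring.
    - apply cont_gen, exd_phi1.
    - apply cont_gen. intros z. auto_derive. trivial. }
  assert (C1 : RInt phi1 0 x + RInt phi1 x (b + x) = RInt phi1 0 (b + x)).
  { apply (RInt_Chasles (V := R_CompleteNormedModule)); apply cont_gen, exd_phi1. }
  assert (C2 : RInt phi2 (- x) 0 + RInt phi2 0 (b - x) = RInt phi2 (- x) (b - x)).
  { apply (RInt_Chasles (V := R_CompleteNormedModule)); apply cont_gen, exd_phi2. }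
  unfold G.
  replace (RInt (fun l : R => l ^ n * (fL (l + x) - fL (l - x))) 0 b) with
    (RInt (fun l => l ^ n * fL (l + x)) 0 b - RInt (fun l => l ^ n * fL (l - x)) 0 b).
  - rewrite E1, E2. lra.
  - rewrite <- (RInt_minus (V := R_CompleteNormedModule)).
    + apply RInt_ext. intros y _. unfold minus, plus, opp; simpl. ring.
    + apply cont_gen. intros z. apply ex_derive_mult. auto_derive; trivial.
      apply (ex_derive_comp fL (fun l => l + x)). apply exd_fL. auto_derive; trivial.
    + apply cont_gen. intros z. apply ex_derive_mult. auto_derive; trivial.
      apply (ex_derive_comp fL (fun l => l - x)). apply exd_fL. auto_derive; trivial.
Qed.


Lemma Qp_val n x : RInt (fun y => (y - x) ^ n * y) 0 x =
  - ((- x) ^ (S (S n)) / INR (S (S n)) + x * (- x) ^ (S n) / INR (S n)).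
Proof.
  apply is_RInt_unique.
  set (F := fun v => (v - x) ^ (S (S n)) / INR (S (S n)) + x * (v - x) ^ (S n) / INR (S n)).
  assert (HF : F x - F 0 = - ((- x) ^ (S (S n)) / INR (S (S n)) + x * (- x) ^ (S n) / INR (S n))).
  { unfold F. replace (x - x) with 0 by ring.
    replace (0 - x) with (- x) by ring. rewrite (pow_i (S (S n))), (pow_i (S n)) by lia. unfold Rdiv. ring. }
  rewrite <- HF.
  apply (@is_RInt_derive R_CompleteNormedModule F).
  - intros v _. unfold F. auto_derive; [trivial|].
    change (match n with 0%nat => 1 | S _ => INR n + 1 end) with (INR (S n)).
    assert (0 < INR (S n)) by (apply lt_0_INR; lia). replace (v + - x) with (v - x) by ring. set (P := (v - x) ^ n). field. lra.
  - intros v _. apply cont_R. auto_derive. trivial.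
Qed.


Lemma lim_shift (F : R -> R) (l c : R) :
  is_lim F p_infty l -> is_lim (fun b => F (b + c)) p_infty l.
Proof.
  intros H. apply is_lim_spec in H. apply is_lim_spec. intros eps.
  destruct (H eps) as [M HM]. exists (M - c). intros y Hy. apply HM. lra.
Qed.

Lemma lim_phi (a : R) n :
  is_lim (fun b => RInt (fun u => (u + a) ^ n * fL u) 0 b) p_infty
    (sum_f_R0 (fun j => Binomial.C n j * a ^ (n - j) * Mom j) n).
Proof.
  eapply is_lim_ext; [|apply (lim_poly (fun j => Binomial.C n j * a ^ (n - j)) n)].
  intros b. apply RInt_ext. intros u _. rewrite binomial. f_equal.
  apply sum_eq. intros; ring.
Qed.

Lemma gen_of_lim (g : R -> R) (l : R) :
  (forall b, ex_RInt g 0 b) ->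
  is_lim (fun b => RInt g 0 b) p_infty l ->
  is_RInt_gen g (at_point 0) (Rbar_locally p_infty) l.
Proof.
  intros Hex Hlim P HP.
  specialize (Hlim P HP).
  apply Filter_prod with (fun a => a = 0) (fun b => P (RInt g 0 b)).
  - reflexivity.
  - exact Hlim.
  - intros a b -> Hb. exists (RInt g 0 b). split; [|exact Hb].
    apply (RInt_correct (V := R_CompleteNormedModule)). apply Hex.
Qed.

Lemma pair_sum (T : nat -> R) k :
  sum_f_R0 T (2 * k + 1) = sum_f_R0 (fun m => T (2 * m)%nat + T (2 * m + 1)%nat) k.
Proof.
  induction k as [|k IH].
  - simpl. reflexivity.
  - replace (2 * S k + 1)%nat with (S (S (2 * k + 1))) by lia.
    rewrite !tech5, IH.
    replace (S (2 * k + 1)) with (2 * S k)%nat by lia.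
    replace (S (2 * S k)) with (2 * S k + 1)%nat by lia. ring.
Qed.

Lemma T_odd k x m : (m <= k)%nat ->
  Binomial.C (2 * k + 1) (2 * m + 1) * ((- x) ^ (2 * k + 1 - (2 * m + 1)) - x ^ (2 * k + 1 - (2 * m + 1)))
   * Mom (2 * m + 1) = 0.
Proof.
  intros Hm. replace (2 * k + 1 - (2 * m + 1))%nat with (2 * (k - m))%nat by lia.
  rewrite pow_opp_even. ring.
Qed.

Lemma T_even k x m : (m <= k)%nat ->
  Binomial.C (2 * k + 1) (2 * m) * ((- x) ^ (2 * k + 1 - 2 * m) - x ^ (2 * k + 1 - 2 * m))
   * Mom (2 * m) =
  INR (Factorial.fact (2 * k + 1)) *
  (theta_shift (S m) * x ^ (2 * k + 3 - 2 * S m) / INR (Factorial.fact (2 * k + 3 - 2 * S m))).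
Proof.
  intros Hm.
  unfold Binomial.C, Mom, theta_shift.
  replace (2 * k + 1 - 2 * m)%nat with (2 * (k - m) + 1)%nat by lia.
  replace (2 * k + 3 - 2 * S m)%nat with (2 * (k - m) + 1)%nat by lia.
  rewrite pow_opp_odd.
  replace (2 * S m)%nat with (S (S (2 * m))) by lia.
  replace (S (S (2 * m)) + 1)%nat with (S (S (S (2 * m)))) by lia.
  unfold zeta_nat. fold (za (S (S (2 * m)))). fold (Zs (S (S (2 * m)))).
  repeat rewrite <- (tech_pow_Rmult 2).
  assert (0 < 2 ^ (2 * m)) by (apply pow_lt; lra).
  pose proof (INR_fact_neq_0 (2 * k + 1)).
  pose proof (INR_fact_neq_0 (2 * m)).
  pose proof (INR_fact_neq_0 (2 * (k - m) + 1)).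
  field. repeat split; lra.
Qed.

Lemma term0 k x :
  INR (Factorial.fact (2 * k + 1)) *
  (theta_shift 0 * x ^ (2 * k + 3 - 2 * 0) / INR (Factorial.fact (2 * k + 3 - 2 * 0))) =
  (- x) ^ (S (S (2 * k + 1))) / INR (S (S (2 * k + 1))) +
  x * (- x) ^ (S (2 * k + 1)) / INR (S (2 * k + 1)).
Proof.
  replace (theta_shift 0) with 1 by (unfold theta_shift; simpl; field).
  replace (2 * k + 3 - 2 * 0)%nat with (S (S (2 * k + 1))) by lia.
  replace (S (S (2 * k + 1))) with (2 * (k + 1) + 1)%nat by lia.
  replace (S (2 * k + 1)) with (2 * (k + 1))%nat by lia.
  rewrite pow_opp_odd, pow_opp_even.
  replace (2 * (k + 1) + 1)%nat with (S (S (2 * k + 1))) by lia.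
  replace (2 * (k + 1))%nat with (S (2 * k + 1)) by lia.
  change (Factorial.fact (S (S (2 * k + 1)))) with (S (S (2 * k + 1)) * Factorial.fact (S (2 * k + 1)))%nat.
  change (Factorial.fact (S (2 * k + 1))) with (S (2 * k + 1) * Factorial.fact (2 * k + 1))%nat.
  rewrite !mult_INR.
  rewrite <- !(tech_pow_Rmult x).
  assert (0 < INR (S (2 * k + 1))) by (apply lt_0_INR; lia).
  assert (0 < INR (S (S (2 * k + 1)))) by (apply lt_0_INR; lia).
  pose proof (INR_fact_neq_0 (2 * k + 1)).
  set (P := x ^ (2 * k + 1)).
  set (a := INR (S (S (2 * k + 1)))) in *. set (b := INR (S (2 * k + 1))) in *.
  set (f := INR (Factorial.fact (2 * k + 1))) in *.
  assert (Hab : a = b + 1) by (unfold a, b; rewrite (S_INR (S (2 * k + 1))); ring).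
  rewrite Hab. field. repeat split; lra.
Qed.

Lemma final_alg k x :
  INR (Factorial.fact (2 * k + 1)) *
     sum_f_R0 (fun i : nat =>
       theta_shift i * x ^ (2 * k + 3 - 2 * i) / INR (Factorial.fact (2 * k + 3 - 2 * i)))
       (S k)
  = sum_f_R0 (fun j => Binomial.C (2 * k + 1) j * (- x) ^ (2 * k + 1 - j) * Mom j) (2 * k + 1)
    - sum_f_R0 (fun j => Binomial.C (2 * k + 1) j * x ^ (2 * k + 1 - j) * Mom j) (2 * k + 1)
    - - ((- x) ^ (S (S (2 * k + 1))) / INR (S (S (2 * k + 1))) +
         x * (- x) ^ (S (2 * k + 1)) / INR (S (2 * k + 1))).
Proof.
  set (n := (2 * k + 1)%nat).
  assert (E : sum_f_R0 (fun j => Binomial.C n j * (- x) ^ (n - j) * Mom j) n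
    - sum_f_R0 (fun j => Binomial.C n j * x ^ (n - j) * Mom j) n =
    sum_f_R0 (fun m => INR (Factorial.fact n) *
      (theta_shift (S m) * x ^ (2 * k + 3 - 2 * S m) / INR (Factorial.fact (2 * k + 3 - 2 * S m)))) k).
  { rewrite <- minus_sum.
    rewrite (sum_eq _ (fun j => Binomial.C n j * ((- x) ^ (n - j) - x ^ (n - j)) * Mom j) n)
      by (intros; cbv beta; ring).
    unfold n. rewrite pair_sum.
    apply sum_eq. intros m Hm. rewrite T_odd, T_even by exact Hm. ring. }
  rewrite E. unfold n.
  rewrite decomp_sum by lia. simpl pred.
  rewrite Rmult_plus_distr_l, term0.
  rewrite scal_sum.
  rewrite (sum_eq (fun m => INR (Factorial.fact (2 * k + 1)) *
      (theta_shift (S m) * x ^ (2 * k + 3 - 2 * S m) / INR (Factorial.fact (2 * k + 3 - 2 * S m))))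
    (fun i => theta_shift (S i) * x ^ (2 * k + 3 - 2 * S i) / INR (Factorial.fact (2 * k + 3 - 2 * S i))
       * INR (Factorial.fact (2 * k + 1)))) by (intros; ring).
  ring.
Qed.


Theorem lemma5p3 (k : nat) (x : R) :
  is_RInt_gen (fun l : R => l ^ (2 * k + 1) * (fL (l + x) - fL (l - x)))
    (at_point 0) (Rbar_locally p_infty)
    (INR (Factorial.fact (2 * k + 1)) *
     sum_f_R0 (fun i : nat =>
       theta_shift i * x ^ (2 * k + 3 - 2 * i) / INR (Factorial.fact (2 * k + 3 - 2 * i)))
       (S k)).
Proof.
  apply gen_of_lim.
  - intros b. apply cont_gen. intros z. unfold fL. auto_derive.
    repeat split; try (apply Rplus_lt_0_compat; [lra | apply exp_pos]); trivial.
  - rewrite final_alg.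
    apply is_lim_ext with (fun b =>
      RInt (fun u => (u - x) ^ (2 * k + 1) * fL u) 0 (b + x)
      - RInt (fun u => (u + x) ^ (2 * k + 1) * fL u) 0 (b + - x)
      - RInt (fun y => (y - x) ^ (2 * k + 1) * y) 0 x).
    + intros b. rewrite fin_id. reflexivity.
    + rewrite <- Qp_val.
      apply is_lim_minus'; [apply is_lim_minus'|apply is_lim_const].
      * apply (lim_shift (fun b => RInt (fun u => (u - x) ^ (2 * k + 1) * fL u) 0 b)).
        eapply is_lim_ext; [|apply (lim_phi (- x))].
        intros b. apply RInt_ext. intros u _. reflexivity.
      * apply (lim_shift (fun b => RInt (fun u => (u + x) ^ (2 * k + 1) * fL u) 0 b)).
        apply lim_phi.
Qed.
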